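(* Let $k$ be a field and $A_k$ a $k$-algebra with a $k$-linear involution $a\mapsto a^*$. Let $E$ be a finite-dimensional $A_k$-module with a nondegenerate $k$-bilinear form $b$ satisfying $b(ax,y)=b(x,a^*y)$ for all $a\in A_k$, $x,y\in E$, where either $b$ is alternating, or $b$ is symmetric and $\mathrm{char}(k)\neq2$. Let $S$ be an $A_k$-submodule of $E$ which is totally isotropic ($b(x,y)=0$ for all $x,y\in S$) and maximal among totally isotropic $A_k$-submodules. Let $S_\perp$ be its orthogonal for $b$, $X=S_\perp/S$, and $b_1$ the nondegenerate form on $X$ induced by $b$. Then: (i) the $A_k$-module $X$ is semisimple, and the only $A_k$-submodule of $X$ totally isotropic for $b_1$ is $0$; (ii) if $b$ is symmetric (and $\mathrm{char}(k)\neq2$), then $b$ is isomorphic to the orthogonal direct sum of $b_1$ and a hyperbolic form of rank $2\dim S$. *)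

(* Defs.v *)
From HB Require Import structures.
From mathcomp Require Import all_boot all_order all_algebra.

Set Implicit Arguments.
Unset Strict Implicit.
Unset Printing Implicit Defensive.

Import Order.TTheory GRing.Theory Num.Theory.
Local Open Scope ring_scope.

Section Defs.
Variable k : fieldType.

Definition klinear (U V : lmodType k) (f : U -> V) : Prop :=
  forall (c : k) (x y : U), f (c *: x + y) = c *: f x + f y.

Definition is_involution (A : algType k) (star : A -> A) : Prop :=
  [/\ klinear star,
      forall a : A, star (star a) = a &
      forall a a' : A, star (a * a') = star a' * star a].

Definition is_module_action (A : algType k) (E : lmodType k) (act : A -> E -> E) : Prop :=
  [/\ forall a : A, klinear (act a),
      forall (c : k) (a a' : A) (x : E), act (c *: a + a') x = c *: act a x + act a' x,
      forall x : E, act 1 x = x &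
      forall (a a' : A) (x : E), act (a * a') x = act a (act a' x)].

Definition kbilinear_form (E : lmodType k) (b : E -> E -> k) : Prop :=
  (forall (c : k) (x y z : E), b (c *: x + y) z = c * b x z + b y z) /\
  (forall (c : k) (x y z : E), b x (c *: y + z) = c * b x y + b x z).

Definition nondegenerate_form (E : lmodType k) (b : E -> E -> k) : Prop :=
  (forall x : E, (forall y, b x y = 0) -> x = 0) /\
  (forall y : E, (forall x, b x y = 0) -> y = 0).

Definition alternating_form (E : lmodType k) (b : E -> E -> k) : Prop :=
  forall x : E, b x x = 0.

Definition symmetric_bform (E : lmodType k) (b : E -> E -> k) : Prop :=
  forall x y : E, b x y = b y x.

Definition Asubmodule (A : algType k) (E : vectType k) (act : A -> E -> E)
  (U : {vspace E}) : Prop :=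
  forall (a : A) (x : E), x \in U -> act a x \in U.

Definition tot_isotropic (E : vectType k) (b : E -> E -> k) (U : {vspace E}) : Prop :=
  forall x y : E, x \in U -> y \in U -> b x y = 0.

Definition in_orth (E : vectType k) (b : E -> E -> k) (S : {vspace E}) (x : E) : Prop :=
  forall s : E, s \in S -> b x s = 0.

Definition semisimple_module (A : algType k) (X : vectType k) (act : A -> X -> X) : Prop :=
  forall U : {vspace X}, Asubmodule act U ->
    exists V : {vspace X}, Asubmodule act V /\ (U + V)%VS = fullv /\ (U :&: V)%VS = 0%VS.

Definition hyperbolic_form (r : nat) (u v : 'rV[k]_(r + r)) : k :=
  (u *m block_mx (0 : 'M[k]_(r, r)) 1%:M 1%:M 0 *m v^T) ord0 ord0.

Definition orth_sum (U V : lmodType k) (b1 : U -> U -> k) (b2 : V -> V -> k)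
  (x y : U * V) : k := b1 x.1 y.1 + b2 x.2 y.2.

End Defs.

(* Main.v *)
Require Import Defs.
From HB Require Import structures.
From mathcomp Require Import all_boot all_order all_algebra.
From mathcomp Require Import ring.
From Stdlib Require Import ClassicalEpsilon.
Import Order.TTheory GRing.Theory Num.Theory.
Set Implicit Arguments.
Unset Strict Implicit.
Unset Printing Implicit Defensive.
Local Open Scope ring_scope.

Section Additive.
Variables (G H : zmodType) (f : G -> H) (fD : forall x y, f (x + y) = f x + f y).
Lemma ah0 : f 0 = 0.
Proof. by apply: (@addrI _ (f 0)); rewrite -fD !addr0. Qed.
Lemma ahN x : f (- x) = - f x.
Proof. by apply: (@addrI _ (f x)); rewrite -fD !subrr ah0. Qed.
Lemma ahB x y : f (x - y) = f x - f y.
Proof. by rewrite fD ahN. Qed.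
Lemma ah_sum I (r : seq I) (P : pred I) (F : I -> G) :
  f (\sum_(i <- r | P i) F i) = \sum_(i <- r | P i) f (F i).
Proof. exact: (big_morph f fD ah0). Qed.
End Additive.
Arguments ah0 {G H f} fD.
Arguments ahN {G H f} fD.
Arguments ahB {G H f} fD.
Arguments ah_sum {G H f} fD.

Section Helpers.
Variable k : fieldType.

Section Lin.
Variables (U V : lmodType k) (f : U -> V) (Hf : klinear f).
Lemma linD x y : f (x + y) = f x + f y.
Proof. by rewrite -[x in LHS]scale1r Hf scale1r. Qed.
Lemma linZ c x : f (c *: x) = c *: f x.
Proof. by rewrite -[c *: x]addr0 Hf (ah0 (f:=f) linD) addr0. Qed.
Lemma lin0 : f 0 = 0. Proof. exact: (ah0 (f:=f) linD). Qed.
Lemma linB x y : f (x - y) = f x - f y. Proof. exact: (ahB (f:=f) linD). Qed.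
Lemma lin_sumZ n (e : 'I_n -> k) (v : 'I_n -> U) :
  f (\sum_i e i *: v i) = \sum_i e i *: f (v i).
Proof. by rewrite (ah_sum (f:=f) linD); apply: eq_bigr => i _; rewrite linZ. Qed.
End Lin.

Section Form.
Variables (V : lmodType k) (f : V -> V -> k) (Hf : kbilinear_form f).
Lemma fDl x y z : f (x + y) z = f x z + f y z.
Proof. by have := Hf.1 1 x y z; rewrite scale1r mul1r. Qed.
Lemma fDr x y z : f z (x + y) = f z x + f z y.
Proof. by have := Hf.2 1 z x y; rewrite scale1r mul1r. Qed.
Lemma f0l z : f 0 z = 0. Proof. exact: (ah0 (f:=fun x => f x z) (fun x y => fDl x y z)). Qed.
Lemma f0r z : f z 0 = 0. Proof. exact: (ah0 (f:=fun x => f z x) (fun x y => fDr x y z)). Qed.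
Lemma fZl c x z : f (c *: x) z = c * f x z.
Proof. by rewrite -[c *: x]addr0 Hf.1 f0l addr0. Qed.
Lemma fZr c x z : f z (c *: x) = c * f z x.
Proof. by rewrite -[c *: x]addr0 Hf.2 f0r addr0. Qed.
Lemma fBl x y z : f (x - y) z = f x z - f y z.
Proof. exact: (ahB (f:=fun x => f x z) (fun x y => fDl x y z)). Qed.
Lemma fBr x y z : f z (x - y) = f z x - f z y.
Proof. exact: (ahB (f:=fun x => f z x) (fun x y => fDr x y z)). Qed.
Lemma fsumlZ n (e : 'I_n -> k) (v : 'I_n -> V) z :
  f (\sum_i e i *: v i) z = \sum_i e i * f (v i) z.
Proof. by rewrite (ah_sum (f:=fun x => f x z) (fun x y => fDl x y z)); apply: eq_bigr => i _; rewrite fZl. Qed.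
Lemma fsumrZ n (e : 'I_n -> k) (v : 'I_n -> V) z :
  f z (\sum_i e i *: v i) = \sum_i e i * f z (v i).
Proof. by rewrite (ah_sum (f:=fun x => f z x) (fun x y => fDr x y z)); apply: eq_bigr => i _; rewrite fZr. Qed.
End Form.

Lemma sum_delta n (F : 'I_n -> k) j : \sum_i F i * (i == j)%:R = F j.
Proof.
rewrite (bigD1 j) //= eqxx mulr1 big1 ?addr0 // => i /negPf ->; by rewrite mulr0.
Qed.
Lemma sum_delta' n (F : 'I_n -> k) j : \sum_i F i * (j == i)%:R = F j.
Proof. by rewrite -(@sum_delta n F j); apply: eq_bigr => i _; rewrite eq_sym. Qed.

Lemma exlin (U V : vectType k) (f : U -> V) :
  klinear f -> exists g : 'Hom(U, V), forall x, g x = f x.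
Proof.
move=> H.
have lf : linear f by move=> c x y; exact: H.
pose fl : {linear U -> V} := HB.pack f (GRing.isLinear.Build k U V *:%R f lf).
exists (linfun fl) => x; by rewrite lfunE.
Qed.

Lemma orth_dim (V : vectType k) (f : V -> V -> k) (U : {vspace V}) :
  kbilinear_form f ->
  exists W : {vspace V}, (forall v, v \in W <-> forall u, u \in U -> f u v = 0)
     /\ (\dim {:V} <= \dim W + \dim U)%N.
Proof.
move=> Hf.
pose h v := \row_(i < \dim U) f (vbasis U)`_i v.
have hl : klinear h.
  by move=> c x y; apply/rowP => i; rewrite !mxE Hf.2.
have [g gE] := exlin hl.
exists (lker g); split.
  move=> v; rewrite memv_ker gE; split.
    move=> /eqP h0 u /coord_vbasis ->.
    rewrite fsumlZ // big1 // => i _.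
    by move/rowP/(_ i): h0; rewrite !mxE => ->; rewrite mulr0.
  move=> H; apply/eqP/rowP => i; rewrite !mxE; apply: H.
  by apply: vbasis_mem; apply: mem_nth; rewrite size_tuple.
have := limg_ker_dim g fullv; rewrite capfv => <-.
rewrite leq_add2l.
apply: leq_trans (dimvS (subvf _)) _.
rewrite dimvf dim_matrix.
by rewrite mul1r.
Qed.


Lemma surj (V : vectType k) (f : V -> V -> k) n (v : n.-tuple V) :
  kbilinear_form f -> (forall y, (forall x, f x y = 0) -> y = 0) -> free v ->
  forall c : 'rV[k]_n, exists x, forall i : 'I_n, f x v`_i = c 0 i.
Proof.
move=> Hf ndr fv c.
pose h x := \row_(i < n) f x v`_i.
have hl : klinear h by move=> a x y; apply/rowP => i; rewrite !mxE Hf.1.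
have [g gE] := exlin hl.
pose D (u w : 'rV[k]_n) := \sum_i u 0 i * w 0 i.
have Db : kbilinear_form D.
  split=> a x y z; rewrite /D mulr_sumr -big_split /=.
    by apply: eq_bigr => i _; rewrite !mxE mulrDl mulrA.
  by apply: eq_big => // i _; rewrite !mxE mulrDr mulrCA.
have [W [WE Wd]] := orth_dim (limg g) Db.
have W0 : W = 0%VS.
  apply/vspaceP => w; rewrite memv0; apply/idP/eqP => [/WE Hw|->]; last exact: mem0v.
  have: \sum_i w 0 i *: v`_i = 0.
    apply: ndr => x; rewrite fsumrZ //.
    apply: etrans (Hw _ (memv_img g (memvf x))); rewrite gE /D.
    apply: eq_bigr => i _; by rewrite mxE mulrC.
  move/freeP: fv => fv /fv w0; apply/rowP => i; by rewrite mxE w0.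
have If : limg g = fullv.
  apply/eqP; rewrite eqEdim subvf /=; move: Wd; by rewrite W0 dimv0 add0n.
have : c \in limg g by rewrite If memvf.
case/memv_imgP => x _ ->; exists x => i; by rewrite gE mxE.
Qed.


Lemma rearr (V : zmodType) (a b c d e f : V) :
  (a + b) - (c + d) - (e + f) = (a - c - e) + (b - d - f).
Proof. by rewrite opprD [in LHS]addrACA opprD [LHS]addrACA. Qed.

Lemma hyp_row r (u1 u2 v1 v2 : 'rV[k]_r) :
  hyperbolic_form (row_mx u1 u2) (row_mx v1 v2) =
  \sum_i u2 0 i * v1 0 i + \sum_i u1 0 i * v2 0 i.
Proof.
rewrite /hyperbolic_form mul_row_block !mulmx0 !mulmx1 addr0 add0r tr_row_mx.
rewrite mul_row_col mxE.
by congr (_ + _); rewrite !mxE; apply: eq_bigr => i _; rewrite !mxE.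
Qed.

End Helpers.

Unset Implicit Arguments.
Set Strict Implicit.

Theorem lemma4p2p4
  (k : fieldType) (A : algType k) (star : A -> A)
  (E : vectType k) (act : A -> E -> E) (b : E -> E -> k)
  (S : {vspace E})
  (X : vectType k) (pi : E -> X) (actX : A -> X -> X) (b1 : X -> X -> k) :
  is_involution star ->
  is_module_action act ->
  kbilinear_form b ->
  nondegenerate_form b ->
  (forall (a : A) (x y : E), b (act a x) y = b x (act (star a) y)) ->
  (alternating_form b \/ (symmetric_bform b /\ (2 : k) != 0)) ->
  (* S is a totally isotropic Asubmodule, maximal among such *)
  Asubmodule act S ->
  tot_isotropic b S ->
  (forall T : {vspace E}, Asubmodule act T -> tot_isotropic b T ->
     (S <= T)%VS -> T = S) ->
  (* (X, pi) is the quotient S_perp / S, with induced action actX and form b1 *)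
  klinear pi ->
  (forall z : X, exists x : E, in_orth b S x /\ pi x = z) ->
  (forall x : E, in_orth b S x -> (pi x = 0 <-> x \in S)) ->
  (forall (a : A) (x : E), in_orth b S x -> actX a (pi x) = pi (act a x)) ->
  (forall x y : E, in_orth b S x -> in_orth b S y -> b1 (pi x) (pi y) = b x y) ->
  [/\ semisimple_module actX,
      (forall U : {vspace X}, Asubmodule actX U -> tot_isotropic b1 U -> U = 0%VS) &
      (symmetric_bform b /\ (2 : k) != 0 ->
         exists phi : E -> X * 'rV[k]_(\dim S + \dim S),
           [/\ klinear phi, bijective phi &
               forall x y : E,
                 orth_sum b1 (@hyperbolic_form k (\dim S)) (phi x) (phi y) = b x y])].
Proof.
move=> [starlin starK starM] [actlin actA act1 actM] bbil [ndl ndr] badj bcase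
  Smod Siso Smax pilin pisurj piker piact pib.
have bsym0 : forall x y, b x y = 0 -> b y x = 0.
  case: bcase => [alt | [sym _]] x y Hxy; last by rewrite sym.
  have := alt (x + y); rewrite fDl // !fDr // !alt add0r addr0 Hxy add0r.
  done.
have Sorth : forall s, s \in S -> in_orth b S s.
  by move=> s hs t ht; apply: Siso.
have orthZD : forall c x y, in_orth b S x -> in_orth b S y -> in_orth b S (c *: x + y).
  by move=> c x y hx hy s0 hs; rewrite bbil.1 hx // hy // mulr0 addr0.
have orth0 : in_orth b S 0 by move=> s0 _; rewrite f0l.
have orthD : forall x y, in_orth b S x -> in_orth b S y -> in_orth b S (x + y).
  by move=> x y hx hy; rewrite -[x]scale1r; apply: orthZD.
have orthZ : forall c x, in_orth b S x -> in_orth b S (c *: x).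
  by move=> c x hx; rewrite -[c *: x]addr0; apply: orthZD.
have orthB : forall x y, in_orth b S x -> in_orth b S y -> in_orth b S (x - y).
  by move=> x y hx hy; apply: orthD => //; rewrite -scaleN1r; apply: orthZ.
have orth_sum : forall n (e : 'I_n -> k) (v : 'I_n -> E),
    (forall i, in_orth b S (v i)) -> in_orth b S (\sum_i e i *: v i).
  move=> n e v hv; apply: (big_ind (in_orth b S)) => // i _; exact: orthZ.
have orth_act : forall a x, in_orth b S x -> in_orth b S (act a x).
  by move=> a x hx s0 hs; rewrite badj; apply: hx; apply: Smod.
have piS : forall s, s \in S -> pi s = 0.
  by move=> s0 hs; apply/(piker s0 (Sorth s0 hs)).
have lift : forall z, {x | in_orth b S x /\ pi x = z}.
  by move=> z; apply: constructive_indefinite_description; apply: pisurj.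
have b1bil : kbilinear_form b1.
  split=> c z1 z2 w.
    case: (lift z1) (lift z2) (lift w) => [x1 [o1 <-]] [x2 [o2 <-]] [y [oy <-]].
    by rewrite -pilin (pib _ _ (orthZD c x1 x2 o1 o2) oy) !pib // bbil.1.
  case: (lift z1) (lift z2) (lift w) => [y [oy <-]] [x1 [o1 <-]] [x2 [o2 <-]].
  by rewrite -pilin (pib _ _ oy (orthZD c x1 x2 o1 o2)) !pib // bbil.2.
have b1adj : forall a z w, b1 (actX a z) w = b1 z (actX (star a) w).
  move=> a z w; case: (lift z) (lift w) => [x [ox <-]] [y [oy <-]].
  by rewrite !piact // (pib _ _ (orth_act a x ox) oy) (pib _ _ ox (orth_act _ y oy)) badj.
have isoz : forall U : {vspace X}, Asubmodule actX U -> tot_isotropic b1 U -> U = 0%VS.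
  move=> U Um Ui.
  pose L := [tuple sval (lift (vbasis U)`_i) | i < \dim U].
  have LO : forall i : 'I_(\dim U), in_orth b S L`_i /\ pi L`_i = (vbasis U)`_i.
    by move=> i; rewrite -tnth_nth tnth_mktuple; exact: proj2_sig (lift _).
  have vU : forall i : 'I_(\dim U), (vbasis U)`_i \in U.
    by move=> i; apply: vbasis_mem; apply: mem_nth; rewrite size_tuple.
  have spanL : forall y, y \in <<L>>%VS -> in_orth b S y /\ pi y \in U.
    move=> y /coord_span ->; split; first by apply: orth_sum => i; exact: (LO i).1.
    rewrite lin_sumZ //; apply: memv_suml => i _; apply: memvZ; by rewrite (LO i).2.
  have liftU : forall z, z \in U -> exists2 y, y \in <<L>>%VS & pi y = z.
    move=> z zU; exists (\sum_i coord (vbasis U) i z *: L`_i).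
      apply: memv_suml => i _; apply: memvZ; apply: memv_span; apply: mem_nth.
      by rewrite size_tuple.
    rewrite lin_sumZ // [RHS](coord_vbasis zU); apply: eq_bigr => i _.
    by rewrite (LO i).2.
  have TS : (S + <<L>>)%VS = S.
    apply: Smax; last exact: addvSl.
    - move=> a x /memv_addP [s0 hs [y hy ->]].
      have [oy piy] := spanL y hy.
      have [y' hy' py'] := liftU _ (Um a _ piy).
      have [oy' _] := spanL y' hy'.
      have dS : act a y - y' \in S.
        apply/(piker _ (orthB _ _ (orth_act a y oy) oy')).
        by rewrite (linB pilin) py' piact // subrr.
      rewrite (linD (actlin a)) -[act a y](subrK y') addrA.
      by apply: memv_add => //; apply: memvD => //; apply: Smod.
    - move=> x y /memv_addP [s0 hs [u hu ->]] /memv_addP [s' hs' [u' hu' ->]].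
      have [ou pu] := spanL u hu; have [ou' pu'] := spanL u' hu'.
      rewrite !fDl // !fDr // (Siso _ _ hs hs') (bsym0 _ _ (ou' s0 hs)) (ou s' hs').
      by rewrite -pib // Ui // !addr0.
  apply/eqP; rewrite -subv0; apply/subvP => z zU; rewrite memv0.
  have [y hy <-] := liftU z zU.
  have yS : y \in S.
    by rewrite -TS -[y]add0r; apply: memv_add => //; apply: mem0v.
  by rewrite piS.
split => //.
  move=> U Um.
  have [W [WE Wd]] := orth_dim U b1bil.
  have Wm : Asubmodule actX W.
    move=> a x /WE hx; apply/WE => u hu.
    rewrite -(starK a) -b1adj; apply: hx; exact: Um.
  have UW0 : (U :&: W)%VS = 0%VS.
    apply: isoz.
      by move=> a x /memv_capP [hu hw]; rewrite memv_cap Um // Wm.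
    by move=> x y /memv_capP [hx _] /memv_capP [_ hy]; exact: ((WE y).1 hy x hx).
  exists W; split => //; split => //.
  apply/eqP; rewrite eqEdim subvf /= dimv_disjoint_sum // addnC.
  by move: Wd; rewrite dimvf.
case=> bsym two.
pose r := \dim S.
pose s := vbasis S.
have sS : forall i : 'I_r, s`_i \in S.
  by move=> i; apply: vbasis_mem; apply: mem_nth; rewrite size_tuple.
have sfree : free s := basis_free (vbasisP S).
have ss : forall i j : 'I_r, b s`_i s`_j = 0 by move=> i j; apply: Siso.
have t0 : forall j : 'I_r, exists t, forall i : 'I_r, b t s`_i = (i == j)%:R.
  move=> j; have [x hx] := surj bbil ndr sfree (\row_i ((i == j)%:R : k)).
  by exists x => i; rewrite hx mxE.
have tex : forall j : 'I_r, {x | forall i : 'I_r, b x s`_i = (i == j)%:R}.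
  by move=> j; apply: constructive_indefinite_description; exact: t0.
pose t j := sval (tex j).
have ht : forall j i : 'I_r, b (t j) s`_i = (i == j)%:R.
  by move=> j; exact: (svalP (tex j)).
pose t' j := t j - (2%:R : k)^-1 *: \sum_i b (t j) (t i) *: s`_i.
have P1 : forall j i : 'I_r, b (t' j) s`_i = (i == j)%:R.
  move=> j i; rewrite fBl // fZl // fsumlZ //.
  have -> : \sum_l b (t j) (t l) * b s`_l s`_i = 0.
    by apply: big1 => l _; rewrite ss mulr0.
  by rewrite mulr0 subr0 ht.
have P1' : forall j i : 'I_r, b s`_i (t' j) = (i == j)%:R by move=> j i; rewrite bsym P1.
have half : ((2%:R : k)^-1 + (2%:R : k)^-1 = 1)%R.
  by rewrite -mulr2n -(mulr_natr ((2%:R : k)^-1) 2) mulVf.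
have P2 : forall j l : 'I_r, b (t' j) (t' l) = 0.
  move=> j l; rewrite [X in b X _]/t' fBl // fZl // fsumlZ //.
  under eq_bigr => i _ do rewrite P1'.
  rewrite sum_delta /t' fBr // fZr // fsumrZ //.
  under eq_bigr => i _ do rewrite ht.
  rewrite sum_delta (bsym (t l)).
  by rewrite -addrA -opprD -mulrDl half mul1r subrr.
pose ca x (i : 'I_r) := b x (t' i).
pose cc x (j : 'I_r) := b x s`_j.
pose w x := x - \sum_i ca x i *: s`_i - \sum_j cc x j *: t' j.
have bSt : forall (e : 'I_r -> k) (m : 'I_r), b (\sum_i e i *: s`_i) (t' m) = e m.
  by move=> e m; rewrite fsumlZ //; under eq_bigr => i _ do rewrite P1'; rewrite sum_delta.
have bSs : forall (e : 'I_r -> k) (m : 'I_r), b (\sum_i e i *: s`_i) s`_m = 0.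
  by move=> e m; rewrite fsumlZ //; apply: big1 => i _; rewrite ss mulr0.
have bTs : forall (e : 'I_r -> k) (m : 'I_r), b (\sum_i e i *: t' i) s`_m = e m.
  by move=> e m; rewrite fsumlZ //; under eq_bigr => i _ do rewrite P1; rewrite sum_delta'.
have bTt : forall (e : 'I_r -> k) (m : 'I_r), b (\sum_i e i *: t' i) (t' m) = 0.
  by move=> e m; rewrite fsumlZ //; apply: big1 => i _; rewrite P2 mulr0.
have ws : forall x (m : 'I_r), b (w x) s`_m = 0.
  by move=> x m; rewrite /w !fBl // bSs bTs subr0 subrr.
have wt : forall x (m : 'I_r), b (w x) (t' m) = 0.
  by move=> x m; rewrite /w !fBl // bSt bTt subr0 subrr.
have orthS : forall v, (forall m : 'I_r, b v s`_m = 0) -> in_orth b S v.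
  move=> v hv s0 /coord_vbasis ->; rewrite fsumrZ //.
  by apply: big1 => i _; rewrite hv mulr0.
have worth : forall x, in_orth b S (w x) by move=> x; apply: orthS; exact: ws.
have decomp : forall x, x = w x + (\sum_i ca x i *: s`_i + \sum_j cc x j *: t' j).
  by move=> x; rewrite /w -(addrA x) -opprD subrK.
have bwy : forall x y, b (w x) y = b (w x) (w y).
  move=> x y; rewrite {1}(decomp y) !fDr // !fsumrZ //.
  have -> : \sum_i ca y i * b (w x) s`_i = 0 by apply: big1 => i _; rewrite ws mulr0.
  have -> : \sum_j cc y j * b (w x) (t' j) = 0 by apply: big1 => i _; rewrite wt mulr0.
  by rewrite !addr0.
have iso : forall x y, b x y = b1 (pi (w x)) (pi (w y)) +
    \sum_i ca x i * cc y i + \sum_j cc x j * ca y j.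
  move=> x y; rewrite {1}(decomp x) (fDl bbil (w x)) (fDl bbil (\sum_(i : 'I_r) _ *: s`_i)).
  rewrite (fsumlZ bbil (fun i => ca x i)) (fsumlZ bbil (fun i => cc x i)).
  rewrite bwy pib //.
  rewrite addrA; congr (_ + _ + _); apply: eq_bigr => i _; by rewrite bsym.
pose phi x := (pi (w x), row_mx (\row_i ca x i) (\row_j cc x j)) : X * 'rV[k]_(r + r).
have sumL : forall c (e1 e2 : 'I_r -> k) (v : 'I_r -> E),
    \sum_i (c * e1 i + e2 i) *: v i = c *: \sum_i e1 i *: v i + \sum_i e2 i *: v i.
  move=> c e1 e2 v; rewrite scaler_sumr -big_split /=; apply: eq_bigr => i _.
  by rewrite scalerDl scalerA.
pose y0 z := sval (lift z) - \sum_i b (sval (lift z)) (t' i) *: s`_i.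
have y0o : forall z, in_orth b S (y0 z).
  move=> z; rewrite /y0; case: (lift z) => x [ox _] /=; apply: orthB => //.
  by apply: orth_sum => i; apply: Sorth; exact: sS.
have y0t : forall z (m : 'I_r), b (y0 z) (t' m) = 0.
  by move=> z m; rewrite /y0 fBl // bSt subrr.
have piy0 : forall z, pi (y0 z) = z.
  move=> z; rewrite /y0; case: (lift z) => x [ox pz] /=.
  rewrite (linB pilin) (lin_sumZ pilin).
  have -> : \sum_i b x (t' i) *: pi s`_i = 0.
    by apply: big1 => i _; rewrite piS ?sS // scaler0.
  by rewrite subr0.
have uniq : forall v, in_orth b S v -> (forall m : 'I_r, b v (t' m) = 0) -> pi v = 0 -> v = 0.
  move=> v ov hv pv; have vS : v \in S by apply/(piker v ov).
  rewrite (coord_vbasis vS); apply: big1 => i _.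
  by have := hv i; rewrite {1}(coord_vbasis vS) bSt => ->; rewrite scale0r.
pose psi (p : X * 'rV[k]_(r + r)) := y0 p.1 + \sum_i (lsubmx p.2) 0 i *: s`_i
   + \sum_j (rsubmx p.2) 0 j *: t' j.
exists phi; split.
- move=> c x y.
  have caL : forall i, ca (c *: x + y) i = c * ca x i + ca y i by move=> i; apply: bbil.1.
  have ccL : forall i, cc (c *: x + y) i = c * cc x i + cc y i by move=> i; apply: bbil.1.
  have e1 : \sum_i ca (c *: x + y) i *: s`_i = \sum_i (c * ca x i + ca y i) *: s`_i.
    by apply: eq_bigr => i _; rewrite caL.
  have e2 : \sum_i cc (c *: x + y) i *: t' i = \sum_i (c * cc x i + cc y i) *: t' i.
    by apply: eq_bigr => i _; rewrite ccL.
  have wL : w (c *: x + y) = c *: w x + w y.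
    by rewrite /w e1 e2 !sumL rearr !scalerBr.
  apply: injective_projections => /=.
    by rewrite wL pilin.
  rewrite scale_row_mx add_row_mx; congr row_mx; apply/rowP => i; by rewrite !mxE (caL, ccL).
- exists psi.
    move=> x.
    have y0w : y0 (pi (w x)) = w x.
      apply/eqP; rewrite -subr_eq0; apply/eqP; apply: uniq.
      + by apply: orthB; [exact: y0o | exact: worth].
      + by move=> m; rewrite fBl // y0t wt subrr.
      + by rewrite (linB pilin) piy0 subrr.
    rewrite /psi /= row_mxKl row_mxKr y0w [RHS]decomp addrA.
    by congr (_ + _ + _); apply: eq_bigr => i _; rewrite mxE.
  move=> [z u].
  have caP : forall m, ca (psi (z, u)) m = lsubmx u 0 m.
    move=> m; rewrite /ca /psi /= (fDl bbil (y0 z + _)) (fDl bbil (y0 z)).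
    by rewrite y0t bSt bTt add0r addr0.
  have ccP : forall m, cc (psi (z, u)) m = rsubmx u 0 m.
    move=> m; rewrite /cc /psi /= (fDl bbil (y0 z + _)) (fDl bbil (y0 z)).
    by rewrite bSs bTs (y0o z _ (sS m)) !add0r.
  have e1 : \sum_i ca (psi (z, u)) i *: s`_i = \sum_i lsubmx u 0 i *: s`_i.
    by apply: eq_bigr => i _; rewrite caP.
  have e2 : \sum_i cc (psi (z, u)) i *: t' i = \sum_i rsubmx u 0 i *: t' i.
    by apply: eq_bigr => i _; rewrite ccP.
  have wP : w (psi (z, u)) = y0 z.
    by rewrite /w e1 e2 /psi /= [y0 z + _ + _]addrAC addrK addrK.
  rewrite /phi wP piy0; congr pair; rewrite -[RHS]hsubmxK; congr row_mx.
    by apply/rowP => i; rewrite mxE caP.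
  by apply/rowP => i; rewrite mxE ccP.
- move=> x y; rewrite /Defs.orth_sum /phi /= hyp_row (iso x y) -addrA.
  congr (_ + _); rewrite addrC; congr (_ + _); apply: eq_bigr => i _; by rewrite !mxE.
Qed.
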